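(* In the call-by-name $\lambda$-calculus, $\approx^n_A=\approx^n_2=\cong^n=\simeq^n=\approx^n_1$.
   Context: $\Lambda^\bullet$ is the set of closed $\lambda$-terms. Contexts are generated by $C::=x\mid[\cdot]\mid C\,C\mid\lambda x.C$, possibly with several holes numbered left to right; $C[\widetilde M]$ fills the $i$-th hole with $M_i$; $C[M]$ fills every hole with $M$. For $\mathcal{R}\subseteq\Lambda^\bullet\times\Lambda^\bullet$, $\mathcal{R}^\star=\{(C[\widetilde M],C[\widetilde N]) : C\text{ a context},\ M_i\,\mathcal{R}\,N_i\ \forall i,\ C[\widetilde M],C[\widetilde N]\in\Lambda^\bullet\}$. Call-by-name reduction on closed terms: $MN\longrightarrow M'N$ if $M\longrightarrow M'$, and $(\lambda x.P)N\longrightarrow P[N/x]$; $\Longrightarrow$ is its reflexive transitive closure; $M{\Downarrow}$ means $M\Longrightarrow\lambda x.P$ for some closed abstraction. $M\simeq^n N$ iff for all contexts $C$ with $C[M],C[N]$ closed, $C[M]{\Downarrow}\iff C[N]{\Downarrow}$. Evaluation contexts $\mathcal{E}::=[\cdot]\mid\mathcal{E}\,M$ ($M\in\Lambda^\bullet$); $M\cong^n N$ iff for all $\mathcal{E}$, $\mathcal{E}[M]{\Downarrow}\iff\mathcal{E}[N]{\Downarrow}$. A relation $\mathcal{R}$ on $\Lambda^\bullet$ is an applicative bisimulation if $M\,\mathcal{R}\,N$ implies: whenever $M\Longrightarrow\lambda x.P$, then $N\Longrightarrow\lambda x.Q$ for some $Q$ with $P[W/x]\,\mathcal{R}\,Q[W/x]$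 for all $W\in\Lambda^\bullet$, and conversely; $\approx^n_A$ is the union of all applicative bisimulations. A coupled relation is a pair $(\mathcal{R}_1,\mathcal{R}_2)$ of relations on $\Lambda^\bullet$ with $\mathcal{R}_1\subseteq\mathcal{R}_2$; it is a (call-by-name) coupled logical bisimulation if whenever $M\,\mathcal{R}_2\,N$: (1) if $M\longrightarrow M'$ then there is $N'$ with $N\Longrightarrow N'$ and $M'\,\mathcal{R}_2\,N'$; (2) if $M=\lambda x.M'$ then $N\Longrightarrow\lambda x.N'$ for some $N'$ and for all $P,Q\in\Lambda^\bullet$ with $P\,\mathcal{R}_1^\star\,Q$, $M'[P/x]\,\mathcal{R}_2\,N'[Q/x]$; (3) the converses with $M$ and $N$ exchanged. $(\approx^n_1,\approx^n_2)$ is the componentwise union of all such bisimulations. *)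

(* Defs.v *)
From Stdlib Require Import List Arith.
Import ListNotations.

Inductive term : Type :=
| Var : nat -> term
| App : term -> term -> term
| Lam : term -> term.

Fixpoint closed_at (k : nat) (t : term) : Prop :=
  match t with
  | Var n => n < k
  | App a b => closed_at k a /\ closed_at k b
  | Lam b => closed_at (S k) b
  end.

Definition closed (t : term) : Prop := closed_at 0 t.

(* t[N/k] for a CLOSED N (no lifting of N needed); indices above k are
   decremented since the binder for k disappears. *)
Fixpoint subst (k : nat) (N : term) (t : term) : term :=
  match t with
  | Var n => if Nat.eqb n k then N else if Nat.ltb k n then Var (pred n) else Var n
  | App a b => App (subst k N a) (subst k N b)
  | Lam b => Lam (subst (S k) N b)
  end.

(* P[N/x] where lambda x. P is written Lam P *)
Definition subst0 (P N : term) : term := subst 0 N P.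

Inductive red : term -> term -> Prop :=
| red_app : forall M M' N, red M M' -> red (App M N) (App M' N)
| red_beta : forall P N, red (App (Lam P) N) (subst0 P N).

Inductive reds : term -> term -> Prop :=
| reds_refl : forall M, reds M M
| reds_step : forall M M' M'', red M M' -> reds M' M'' -> reds M M''.

Definition conv (M : term) : Prop := exists P, reds M (Lam P).

(* Contexts, possibly with several holes (capturing: filling is literal). *)
Inductive ctx : Type :=
| CVar : nat -> ctx
| CHole : ctx
| CApp : ctx -> ctx -> ctx
| CLam : ctx -> ctx.

Fixpoint nholes (C : ctx) : nat :=
  match C with
  | CVar _ => 0
  | CHole => 1
  | CApp C1 C2 => nholes C1 + nholes C2
  | CLam C1 => nholes C1
  end.

(* C[M_1,...,M_n]: fill the i-th hole (left to right) with the i-th term *)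
Fixpoint fill (C : ctx) (l : list term) : term :=
  match C with
  | CVar n => Var n
  | CHole => match l with M :: _ => M | [] => Var 0 end
  | CApp C1 C2 => App (fill C1 (firstn (nholes C1) l)) (fill C2 (skipn (nholes C1) l))
  | CLam C1 => Lam (fill C1 l)
  end.

Fixpoint fill_all (C : ctx) (M : term) : term :=
  match C with
  | CVar n => Var n
  | CHole => M
  | CApp C1 C2 => App (fill_all C1 M) (fill_all C2 M)
  | CLam C1 => Lam (fill_all C1 M)
  end.

Definition relation := term -> term -> Prop.

Definition rel_closed (R : relation) : Prop :=
  forall M N, R M N -> closed M /\ closed N.

Definition star (R : relation) : relation := fun M N =>
  exists (C : ctx) (Ms Ns : list term),
    length Ms = nholes C /\ Forall2 R Ms Ns /\
    M = fill C Ms /\ N = fill C Ns /\ closed M /\ closed N.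

Definition ctx_equiv (M N : term) : Prop :=
  forall C : ctx, closed (fill_all C M) -> closed (fill_all C N) ->
    (conv (fill_all C M) <-> conv (fill_all C N)).

Inductive ectx : Type :=
| EHole : ectx
| EApp : ectx -> term -> ectx.

Fixpoint ectx_ok (E : ectx) : Prop :=
  match E with
  | EHole => True
  | EApp E' M => ectx_ok E' /\ closed M
  end.

Fixpoint efill (E : ectx) (M : term) : term :=
  match E with
  | EHole => M
  | EApp E' N => App (efill E' M) N
  end.

Definition eval_equiv (M N : term) : Prop :=
  forall E : ectx, ectx_ok E -> (conv (efill E M) <-> conv (efill E N)).

Definition app_bisim (R : relation) : Prop :=
  rel_closed R /\
  forall M N, R M N ->
    (forall P, reds M (Lam P) -> exists Q, reds N (Lam Q) /\
        forall W, closed W -> R (subst0 P W) (subst0 Q W)) /\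
    (forall Q, reds N (Lam Q) -> exists P, reds M (Lam P) /\
        forall W, closed W -> R (subst0 P W) (subst0 Q W)).

Definition app_bisimilar (M N : term) : Prop :=
  exists R, app_bisim R /\ R M N.

Definition coupled_lbisim (R1 R2 : relation) : Prop :=
  rel_closed R1 /\ rel_closed R2 /\
  (forall M N, R1 M N -> R2 M N) /\
  forall M N, R2 M N ->
    (forall M', red M M' -> exists N', reds N N' /\ R2 M' N') /\
    (forall M', M = Lam M' -> exists N', reds N (Lam N') /\
        forall P Q, star R1 P Q -> R2 (subst0 M' P) (subst0 N' Q)) /\
    (forall N', red N N' -> exists M', reds M M' /\ R2 M' N') /\
    (forall N', N = Lam N' -> exists M', reds M (Lam M') /\
        forall P Q, star R1 P Q -> R2 (subst0 M' P) (subst0 N' Q)).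

Definition clb1 (M N : term) : Prop :=
  exists R1 R2, coupled_lbisim R1 R2 /\ R1 M N.
Definition clb2 (M N : term) : Prop :=
  exists R1 R2, coupled_lbisim R1 R2 /\ R2 M N.

(* Main.v *)
Require Import Defs.
From Stdlib Require Import List Arith Lia.
Import ListNotations.

Lemma closed_at_mono : forall t k k', closed_at k t -> k <= k' -> closed_at k' t.
Proof.
  induction t; simpl; intros k k' H Hle.
  - lia.
  - destruct H; split; eauto.
  - apply (IHt (S k)); [assumption | lia].
Qed.

Lemma subst_closed_id : forall t k N, closed_at k t -> subst k N t = t.
Proof.
  induction t; simpl; intros k N H.
  - destruct (Nat.eqb_spec n k); [lia|]. destruct (Nat.ltb_spec k n); [lia|]. reflexivity.
  - destruct H; rewrite IHt1, IHt2; auto.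
  - rewrite IHt; auto.
Qed.

Lemma closed_subst : forall t k N, closed_at (S k) t -> closed_at 0 N -> closed_at k (subst k N t).
Proof.
  induction t; simpl; intros k N H HN.
  - destruct (Nat.eqb_spec n k).
    + eapply closed_at_mono; [eassumption | lia].
    + destruct (Nat.ltb_spec k n); [lia|]. simpl. lia.
  - destruct H; split; auto.
  - apply IHt; auto.
Qed.

Lemma red_closed : forall X Y, red X Y -> closed X -> closed Y.
Proof.
  induction 1; unfold closed; simpl; intros Hc.
  - destruct Hc; split; [apply IHred|]; assumption.
  - destruct Hc. unfold subst0. apply closed_subst; auto.
Qed.

Lemma reds_closed : forall X Y, reds X Y -> closed X -> closed Y.
Proof. induction 1; intros; eauto using red_closed. Qed.

Lemma red_Lam : forall P X, red (Lam P) X -> False.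
Proof. intros P X H; inversion H. Qed.

Lemma red_det : forall X Y, red X Y -> forall Z, red X Z -> Y = Z.
Proof.
  induction 1; intros Z HZ; inversion HZ; subst.
  - f_equal; auto.
  - exfalso; eapply red_Lam; eassumption.
  - exfalso; eapply red_Lam; eassumption.
  - reflexivity.
Qed.

Lemma reds_trans : forall X Y Z, reds X Y -> reds Y Z -> reds X Z.
Proof. induction 1; intros; eauto using reds_step. Qed.

Lemma reds_one : forall X Y, red X Y -> reds X Y.
Proof. intros; eapply reds_step; eauto using reds_refl. Qed.

Lemma conv_red_fwd : forall X Y, red X Y -> conv X -> conv Y.
Proof.
  intros X Y H [P HP]. inversion HP; subst.
  - exfalso; eapply red_Lam; eassumption.
  - rewrite (red_det _ _ H _ H0). exists P; assumption.
Qed.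

Lemma conv_red : forall X Y, red X Y -> (conv X <-> conv Y).
Proof.
  split; [apply conv_red_fwd; auto|].
  intros [P HP]; exists P; eapply reds_step; eauto.
Qed.

Lemma conv_reds : forall X Y, reds X Y -> (conv X <-> conv Y).
Proof.
  induction 1; [tauto|]. rewrite (conv_red _ _ H). auto.
Qed.

Fixpoint apps (M : term) (ws : list term) : term :=
  match ws with
  | [] => M
  | w :: ws' => apps (App M w) ws'
  end.

Lemma red_apps : forall ws M M', red M M' -> red (apps M ws) (apps M' ws).
Proof. induction ws; simpl; intros; auto using red_app. Qed.

Lemma reds_apps : forall ws M M', reds M M' -> reds (apps M ws) (apps M' ws).
Proof. induction 1; eauto using reds_refl, reds_step, red_apps. Qed.

Lemma reds_app_l : forall M M' W, reds M M' -> reds (App M W) (App M' W).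
Proof. induction 1; eauto using reds_refl, reds_step, red_app. Qed.

Lemma apps_App : forall ws a b, exists c d, apps (App a b) ws = App c d.
Proof.
  induction ws; simpl; intros.
  - eauto.
  - apply IHws.
Qed.

Lemma apps_Lam : forall ws M P, apps M ws = Lam P -> ws = [] /\ M = Lam P.
Proof.
  destruct ws; simpl; intros M P H.
  - auto.
  - destruct (apps_App ws M t) as [c [d E]]. rewrite E in H; discriminate.
Qed.

Lemma red_apps_inv : forall ws M X, red (apps M ws) X -> (forall P, M <> Lam P) ->
  exists Y, red M Y /\ X = apps Y ws.
Proof.
  induction ws; simpl; intros M X H HM.
  - eauto.
  - destruct (IHws _ _ H) as [Y [HY EY]].
    + intros P; discriminate.
    + inversion HY; subst.
      * eauto.
      * exfalso; eapply HM; reflexivity.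
Qed.

Lemma apps_snoc : forall l M w, apps M (l ++ [w]) = App (apps M l) w.
Proof. induction l; simpl; auto. Qed.

Lemma closed_apps : forall ws X, closed X -> Forall closed ws -> closed (apps X ws).
Proof.
  induction ws; simpl; intros X HX Hws; auto.
  inversion Hws; subst. apply IHws; auto. split; auto.
Qed.

Lemma beta_apps : forall M P W ws, reds M (Lam P) ->
  (conv (apps M (W :: ws)) <-> conv (apps (subst0 P W) ws)).
Proof.
  intros. simpl.
  rewrite (conv_reds _ _ (reds_apps ws _ _ (reds_app_l _ _ W H))).
  apply conv_red. apply red_apps. apply red_beta.
Qed.

Definition eqv (M N : term) : Prop :=
  forall ws, Forall closed ws -> (conv (apps M ws) <-> conv (apps N ws)).
Definition EQ (M N : term) : Prop := closed M /\ closed N /\ eqv M N.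

Lemma EQ_sym : forall M N, EQ M N -> EQ N M.
Proof. intros M N [A [B C]]; split; [|split]; auto. intros ws H; rewrite (C ws H); tauto. Qed.

Lemma EQ_trans : forall M N O, EQ M N -> EQ N O -> EQ M O.
Proof.
  intros M N O [A [B C]] [_ [D E]]; split; [|split]; auto.
  intros ws H; rewrite (C ws H); apply E; auto.
Qed.

Lemma EQ_red : forall M M', red M M' -> closed M -> EQ M M'.
Proof.
  intros; split; [|split]; eauto using red_closed.
  intros ws Hws. apply (conv_red _ _ (red_apps ws _ _ H)).
Qed.

Lemma EQ_beta : forall M N P Q W, EQ M N -> reds M (Lam P) -> reds N (Lam Q) -> closed W ->
  EQ (subst0 P W) (subst0 Q W).
Proof.
  intros M N P Q W [HM [HN E]] HP HQ HW.
  assert (closed (Lam P)) by eauto using reds_closed.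
  assert (closed (Lam Q)) by eauto using reds_closed.
  split; [apply closed_subst; auto|]. split; [apply closed_subst; auto|].
  intros ws Hws. split.
  - rewrite <- (beta_apps _ _ _ _ HP), <- (beta_apps _ _ _ _ HQ).
    apply E; constructor; auto.
  - rewrite <- (beta_apps _ _ _ _ HP), <- (beta_apps _ _ _ _ HQ).
    apply E; constructor; auto.
Qed.

Inductive comp (B : relation) : term -> term -> Prop :=
| cVar : forall n, comp B (Var n) (Var n)
| cApp : forall a a' b b', comp B a a' -> comp B b b' -> comp B (App a b) (App a' b')
| cLam : forall a a', comp B a a' -> comp B (Lam a) (Lam a')
| cBase : forall M N, B M N -> comp B M N.

Lemma comp_refl : forall B t, comp B t t.
Proof. induction t; constructor; auto. Qed.

Lemma comp_sym : forall B, (forall M N, B M N -> B N M) ->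
  forall X Y, comp B X Y -> comp B Y X.
Proof. induction 2; constructor; auto. Qed.

Lemma comp_apps : forall B ws X Y, comp B X Y -> comp B (apps X ws) (apps Y ws).
Proof. induction ws; simpl; intros; auto. apply IHws. constructor; auto. apply comp_refl. Qed.

Lemma comp_subst : forall B, (forall M N, B M N -> closed M /\ closed N) ->
  forall b b', closed b -> closed b' -> comp B b b' ->
  forall P P', comp B P P' -> forall k, comp B (subst k b P) (subst k b' P').
Proof.
  intros B HB b b' Hb Hb' Hbb. induction 1; intros k; simpl.
  - destruct (Nat.eqb n k); auto. destruct (Nat.ltb k n); constructor.
  - constructor; auto.
  - constructor; auto.
  - destruct (HB _ _ H).
    rewrite !subst_closed_id by (eapply closed_at_mono; [eassumption|lia]).
    constructor; auto.
Qed.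

Lemma decomp : forall B, (forall M N, B M N -> EQ M N) ->
  forall X Y, comp B X Y -> closed X -> closed Y -> forall X', red X X' ->
  exists Y', comp B X' Y' /\ closed Y' /\
    forall ws, Forall closed ws -> conv (apps Y' ws) -> conv (apps Y ws).
Proof.
  intros B HB. induction 1; intros HX HY X' HR.
  - inversion HR.
  - inversion HR as [? a1 ? Hr|]; subst.
    + destruct HX as [HXa HXb]; destruct HY as [HYa HYb].
      destruct (IHcomp1 HXa HYa _ Hr) as [a1' [C1 [Cl1 P1]]].
      exists (App a1' b'). split; [constructor; auto|]. split; [split; auto|].
      intros ws Hws Hc. change (conv (apps a' (b'::ws))). apply P1; [constructor; auto| exact Hc].
    + destruct HX as [HXa HXb]; destruct HY as [HYa HYb].
      inversion H; subst.
      * exists (subst0 a'0 b'). split; [apply comp_subst; auto|].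
        { intros; destruct (HB _ _ H1) as [? [? _]]; auto. }
        split; [apply closed_subst; auto|].
        intros ws Hws Hc. simpl. apply (conv_red _ _ (red_apps ws _ _ (red_beta _ _))). auto.
      * exists (subst0 P b'). split; [apply comp_subst; auto using comp_refl|].
        { intros; destruct (HB _ _ H2) as [? [? _]]; auto. }
        split; [apply closed_subst; auto|].
        intros ws Hws Hc. destruct (HB _ _ H1) as [_ [_ E]].
        change (conv (apps a' (b' :: ws))). apply E; [constructor; auto|].
        simpl. apply (conv_red _ _ (red_apps ws _ _ (red_beta _ _))). auto.
  - inversion HR.
  - exists X'. split; [apply comp_refl|]. split; [eapply red_closed; eauto|].
    intros ws Hws Hc. destruct (HB _ _ H) as [_ [_ E]]. apply E; auto.
    apply (conv_red _ _ (red_apps ws _ _ HR)); auto.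
Qed.

Lemma comp_conv : forall B, (forall M N, B M N -> EQ M N) ->
  forall X Y, comp B X Y -> closed X -> closed Y -> conv X -> conv Y.
Proof.
  intros B HB X Y HC HX HY [P HP].
  remember (Lam P) as V. revert Y HC HY HeqV. induction HP; intros Y HC HY HeqV; subst.
  - inversion HC; subst.
    + exists a'; apply reds_refl.
    + destruct (HB _ _ H) as [_ [_ E]]. apply (E [] (Forall_nil _)). exists P; apply reds_refl.
  - destruct (decomp B HB _ _ HC HX HY _ H) as [Y' [C' [Cl' P']]].
    apply (P' [] (Forall_nil _)). eapply IHHP; eauto using red_closed.
Qed.

Lemma comp_EQ : forall B, (forall M N, B M N -> EQ M N) -> (forall M N, B M N -> B N M) ->
  forall X Y, comp B X Y -> closed X -> closed Y -> EQ X Y.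
Proof.
  intros B HB Hs X Y HC HX HY. split; [|split]; auto. intros ws Hws. split.
  - intros. eapply comp_conv; eauto using comp_apps, closed_apps.
  - intros. eapply comp_conv; eauto using comp_apps, closed_apps, comp_sym.
Qed.

Fixpoint tctx (t : term) : ctx :=
  match t with
  | Var n => CVar n
  | App a b => CApp (tctx a) (tctx b)
  | Lam a => CLam (tctx a)
  end.

Lemma nholes_tctx : forall t, nholes (tctx t) = 0.
Proof. induction t; simpl; auto. rewrite IHt1, IHt2; auto. Qed.

Lemma fill_tctx : forall t l, fill (tctx t) l = t.
Proof. induction t; simpl; intros; f_equal; auto. Qed.

Lemma fill_all_tctx : forall t M, fill_all (tctx t) M = t.
Proof. induction t; simpl; intros; f_equal; auto. Qed.

Fixpoint elist (E : ectx) : list term :=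
  match E with
  | EHole => []
  | EApp E' w => elist E' ++ [w]
  end.

Lemma efill_apps : forall E M, efill E M = apps M (elist E).
Proof. induction E; simpl; intros; auto. rewrite apps_snoc, IHE; auto. Qed.

Lemma ectx_ok_elist : forall E, ectx_ok E -> Forall closed (elist E).
Proof.
  induction E; simpl; intros; auto. destruct H. apply Forall_app; split; auto.
Qed.

Definition ectx_of (ws : list term) : ectx := fold_left (fun E w => EApp E w) ws EHole.

Lemma efill_fold : forall ws E M,
  efill (fold_left (fun E w => EApp E w) ws E) M = apps (efill E M) ws.
Proof. induction ws; simpl; intros; auto. Qed.

Lemma ok_fold : forall ws E, ectx_ok E -> Forall closed ws ->
  ectx_ok (fold_left (fun E w => EApp E w) ws E).
Proof. induction ws; simpl; intros; auto. inversion H0; subst. apply IHws; simpl; auto. Qed.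

Lemma eval_eqv : forall M N, eval_equiv M N <-> eqv M N.
Proof.
  split.
  - intros H ws Hws. pose proof (H (ectx_of ws) (ok_fold ws EHole I Hws)).
    unfold ectx_of in H0. rewrite !efill_fold in H0. exact H0.
  - intros H E HE. rewrite !efill_apps. apply H. apply ectx_ok_elist; auto.
Qed.

Fixpoint ctx_apps (C : ctx) (ws : list term) : ctx :=
  match ws with
  | [] => C
  | w :: ws' => ctx_apps (CApp C (tctx w)) ws'
  end.

Lemma fill_ctx_apps : forall ws C M, fill_all (ctx_apps C ws) M = apps (fill_all C M) ws.
Proof. induction ws; simpl; intros; auto. rewrite IHws. simpl. rewrite fill_all_tctx; auto. Qed.

Lemma ctx_EQ : forall M N, closed M -> closed N -> ctx_equiv M N -> EQ M N.
Proof.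
  intros M N HM HN H. split; [|split]; auto. intros ws Hws.
  pose proof (H (ctx_apps CHole ws)). rewrite !fill_ctx_apps in H0. simpl in H0.
  apply H0; apply closed_apps; auto.
Qed.

Lemma EQ_ctx : forall M N, EQ M N -> ctx_equiv M N.
Proof.
  intros M N HE C HC1 HC2.
  set (B := fun X Y => (X = M /\ Y = N) \/ (X = N /\ Y = M)).
  assert (HB : forall X Y, B X Y -> EQ X Y).
  { intros X Y [[-> ->]|[-> ->]]; auto using EQ_sym. }
  assert (Hs : forall X Y, B X Y -> B Y X).
  { intros X Y [[-> ->]|[-> ->]]; unfold B; auto. }
  assert (H : forall C0, comp B (fill_all C0 M) (fill_all C0 N)).
  { induction C0; simpl; try (constructor; auto; fail). apply cBase; left; auto. }
  destruct (comp_EQ B HB Hs _ _ (H C) HC1 HC2) as [_ [_ E]].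
  apply (E [] (Forall_nil _)).
Qed.

Lemma Forall2_firstn : forall (B : relation) n l1 l2, Forall2 B l1 l2 -> Forall2 B (firstn n l1) (firstn n l2).
Proof. induction n; intros; simpl; auto. destruct H; simpl; auto. Qed.

Lemma Forall2_skipn : forall (B : relation) n l1 l2, Forall2 B l1 l2 -> Forall2 B (skipn n l1) (skipn n l2).
Proof. induction n; intros; simpl; auto. destruct H; simpl; auto. Qed.

Lemma fill_comp : forall B C Ms Ns, Forall2 B Ms Ns -> comp B (fill C Ms) (fill C Ns).
Proof.
  induction C; simpl; intros Ms Ns H.
  - constructor.
  - destruct H; [constructor|]. apply cBase; auto.
  - constructor; [apply IHC1; apply Forall2_firstn|apply IHC2; apply Forall2_skipn]; auto.
  - constructor; auto.
Qed.

Lemma star_comp : forall B P Q, star B P Q -> comp B P Q /\ closed P /\ closed Q.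
Proof.
  intros B P Q [C [Ms [Ns [_ [HF [-> [-> [HP HQ]]]]]]]]. auto using fill_comp.
Qed.

Lemma star_refl : forall R W, closed W -> star R W W.
Proof.
  intros R W HW. exists (tctx W), [], []. rewrite nholes_tctx, fill_tctx. repeat split; auto.
Qed.

Lemma EQ_subst_star : forall A P Q, closed (Lam A) -> star EQ P Q -> EQ (subst0 A P) (subst0 A Q).
Proof.
  intros A P Q HA HS. destruct (star_comp _ _ _ HS) as [HC [HP HQ]].
  apply (comp_EQ EQ (fun _ _ H => H) EQ_sym).
  - apply comp_subst; auto using comp_refl. intros M N [? [? _]]; auto.
  - apply closed_subst; auto.
  - apply closed_subst; auto.
Qed.

Lemma EQ_coupled : coupled_lbisim EQ EQ.
Proof.
  split; [intros M N [? [? _]]; auto|]. split; [intros M N [? [? _]]; auto|].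
  split; [auto|].
  intros M N HE. split; [|split; [|split]].
  - intros M' HR. exists N. split; [apply reds_refl|].
    apply EQ_trans with M; auto. apply EQ_sym, EQ_red; auto. destruct HE; auto.
  - intros M' ->. destruct HE as [HM [HN E]] eqn:HE'.
    assert (conv N) as [N' HN'] by (apply (E [] (Forall_nil _)); exists M'; apply reds_refl).
    exists N'. split; auto. intros P Q HS.
    destruct (star_comp _ _ _ HS) as [_ [HP HQ]].
    apply EQ_trans with (subst0 M' Q).
    + apply EQ_subst_star; auto.
    + eapply EQ_beta; eauto using reds_refl.
  - intros N' HR. exists M. split; [apply reds_refl|].
    apply EQ_trans with N; auto. apply EQ_red; auto. destruct HE as [_ [? _]]; auto.
  - intros N' ->. destruct HE as [HM [HN E]] eqn:HE'.
    assert (conv M) as [M' HM'] by (apply (E [] (Forall_nil _)); exists N'; apply reds_refl).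
    exists M'. split; auto. intros P Q HS.
    destruct (star_comp _ _ _ HS) as [_ [HP HQ]].
    apply EQ_trans with (subst0 N' P).
    + eapply EQ_beta; eauto using reds_refl.
    + apply EQ_subst_star; auto.
Qed.

Lemma cl_reds_l : forall R1 R2, coupled_lbisim R1 R2 -> forall M V, reds M V ->
  forall N, R2 M N -> exists N', reds N N' /\ R2 V N'.
Proof.
  intros R1 R2 HC. induction 1; intros N HR.
  - exists N; split; auto using reds_refl.
  - destruct HC as [_ [_ [_ HC]]]. destruct (HC _ _ HR) as [H1 _].
    destruct (H1 _ H) as [N1 [HN1 HR1]].
    destruct (IHreds _ HR1) as [N2 [HN2 HR2]]. exists N2; split; eauto using reds_trans.
Qed.

Lemma cl_reds_r : forall R1 R2, coupled_lbisim R1 R2 -> forall N V, reds N V ->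
  forall M, R2 M N -> exists M', reds M M' /\ R2 M' V.
Proof.
  intros R1 R2 HC. induction 1; intros M0 HR.
  - exists M0; split; auto using reds_refl.
  - destruct HC as [_ [_ [_ HC]]]. destruct (HC _ _ HR) as [_ [_ [H1 _]]].
    destruct (H1 _ H) as [N1 [HN1 HR1]].
    destruct (IHreds _ HR1) as [N2 [HN2 HR2]]. exists N2; split; eauto using reds_trans.
Qed.

Lemma clb2_app : forall M N, clb2 M N -> app_bisimilar M N.
Proof.
  intros M N [R1 [R2 [HC HR]]]. exists R2. split; auto.
  split; [destruct HC as [_ [? _]]; auto|].
  intros M0 N0 H0. split.
  - intros P HP. destruct (cl_reds_l _ _ HC _ _ HP _ H0) as [N1 [HN1 HR1]].
    destruct HC as [HC1 [HC2 [_ HC]]]. destruct (HC _ _ HR1) as [_ [H2 _]].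
    destruct (H2 _ eq_refl) as [Q [HQ HPQ]]. exists Q. split; [eauto using reds_trans|].
    intros W HW. apply HPQ, star_refl; auto.
  - intros Q HQ. destruct (cl_reds_r _ _ HC _ _ HQ _ H0) as [M1 [HM1 HR1]].
    destruct HC as [HC1 [HC2 [_ HC]]]. destruct (HC _ _ HR1) as [_ [_ [_ H2]]].
    destruct (H2 _ eq_refl) as [P [HP HPQ]]. exists P. split; [eauto using reds_trans|].
    intros W HW. apply HPQ, star_refl; auto.
Qed.

Lemma classic_lam : forall M, (exists A, M = Lam A) \/ (forall P, M <> Lam P).
Proof. destruct M; [right|right|left]; try (intros P; discriminate). eauto. Qed.

Lemma app_dir : forall R, app_bisim R -> forall X V, reds X V -> forall P, V = Lam P ->
  forall M0 M N ws, X = apps M ws -> reds M0 M -> R M0 N -> Forall closed ws ->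
  conv (apps N ws).
Proof.
  intros R [_ HR]. induction 1 as [X|X X1 V Hr Hrs IH]; intros P HV M0 M1 N ws HX H0 HR0 Hws; subst.
  - destruct (apps_Lam _ _ _ (eq_sym HX)) as [-> ->].
    destruct (HR _ _ HR0) as [H1 _]. destruct (H1 _ H0) as [Q [HQ _]]. exists Q; auto.
  - destruct (classic_lam M1) as [[A ->]|HnL].
    + destruct ws as [|w ws].
      * exfalso; eapply red_Lam; eassumption.
      * inversion Hws; subst.
        pose proof (red_det _ _ Hr _ (red_apps ws _ _ (red_beta A w))) as ->.
        destruct (HR _ _ HR0) as [H1 _]. destruct (H1 _ H0) as [Q [HQ HAQ]].
        apply (beta_apps _ _ _ _ HQ).
        eapply IH; eauto using reds_refl.
    + destruct (red_apps_inv _ _ _ Hr HnL) as [Y [HY ->]].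
      eapply IH; eauto. eapply reds_trans; eauto using reds_one.
Qed.

Lemma app_flip : forall R, app_bisim R -> app_bisim (fun M N => R N M).
Proof.
  intros R [Hc HR]. split.
  - intros M N H; destruct (Hc _ _ H); auto.
  - intros M N H. destruct (HR _ _ H) as [H1 H2]. split.
    + intros P HP. destruct (H2 _ HP) as [Q [HQ HW]]. eauto.
    + intros Q HQ. destruct (H1 _ HQ) as [P [HP HW]]. eauto.
Qed.

Lemma app_EQ : forall M N, app_bisimilar M N -> EQ M N.
Proof.
  intros M N [R [HA HR]].
  destruct (proj1 HA _ _ HR) as [HM HN].
  split; [|split]; auto. intros ws Hws. split.
  - intros [P HP]. eapply (app_dir R HA); eauto using reds_refl.
  - intros [P HP]. eapply (app_dir _ (app_flip R HA)); eauto using reds_refl.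
Qed.

Lemma EQ_app : forall M N, EQ M N -> app_bisimilar M N.
Proof.
  intros M N HE. exists EQ. split; auto. split; [intros X Y [? [? _]]; auto|].
  intros X Y HXY. destruct HXY as [HX [HY E]] eqn:HXY'. split.
  - intros P HP.
    assert (conv Y) as [Q HQ] by (apply (E [] (Forall_nil _)); exists P; auto).
    exists Q; split; auto. intros W HW. eapply EQ_beta; eauto.
  - intros Q HQ.
    assert (conv X) as [P HP] by (apply (E [] (Forall_nil _)); exists Q; auto).
    exists P; split; auto. intros W HW. eapply EQ_beta; eauto.
Qed.

Theorem mainTheorem10 : forall M N : term, closed M -> closed N ->
  (app_bisimilar M N <-> clb2 M N) /\
  (clb2 M N <-> eval_equiv M N) /\
  (eval_equiv M N <-> ctx_equiv M N) /\
  (ctx_equiv M N <-> clb1 M N).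
Proof.
  intros M N HM HN.
  assert (A1 : app_bisimilar M N <-> EQ M N) by (split; auto using app_EQ, EQ_app).
  assert (A2 : clb2 M N <-> EQ M N).
  { split; [intros; apply app_EQ, clb2_app; auto|].
    intros H; exists EQ, EQ; split; auto using EQ_coupled. }
  assert (A3 : eval_equiv M N <-> EQ M N).
  { rewrite eval_eqv. split; [intros; split; [|split]; auto|intros [? [? ?]]; auto]. }
  assert (A4 : ctx_equiv M N <-> EQ M N) by (split; auto using ctx_EQ, EQ_ctx).
  assert (A5 : clb1 M N <-> EQ M N).
  { split.
    - intros [R1 [R2 [HC HR]]]. apply app_EQ, clb2_app. exists R1, R2.
      split; auto. destruct HC as [_ [_ [? _]]]; auto.
    - intros H; exists EQ, EQ; split; auto using EQ_coupled. }
  rewrite A1, A2, A3, A4, A5. tauto.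
Qed.
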